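(* Let $v$ be a scalar-valued function on an open set $\Omega\subseteq\mathbb{R}^n$ ($n>1$), let $\lambda\neq0$ be a complex number, let $\underline{f}$ be a vector-valued solution of the Clifford Riccati equation $\partial_{\underline{x}}\underline{f}+\underline{f}^2=v$, and let $\phi$ be a scalar-valued solution of the Schrödinger equation $(-\Delta_n - vI)\phi=\lambda^2\phi$. Then the vector-valued function \[\underline{h}=\sum_{j=1}^n h_je_j=\partial_{\underline{x}}^{-\underline{f}}\phi=\partial_{\underline{x}}\phi-\phi\,\underline{f}\] is a solution of the equation \[\underline{h}\,(-\Delta_n - v) - 2\sum_{j=1}^n h_j\,\partial_{x_j}\underline{f}=\lambda^2\underline{h},\] where $\underline{h}\,(-\Delta_n - v)$ stands for $-\Delta_n\underline{h}-\underline{h}\,v$.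
   Context: $\mathbb{R}_{0,n}$ is the real Clifford algebra generated by an orthonormal basis $e_1,\dots,e_n$ of $\mathbb{R}^n$ with relations $e_je_k+e_ke_j=-2\delta_{jk}$; $\mathbb{C}_n=\mathbb{R}_{0,n}\otimes\mathbb{C}$. The Dirac operator is $\partial_{\underline{x}}=\sum_{j=1}^n e_j\partial_{x_j}$, acting from the left; $\Delta_n=-\partial_{\underline{x}}^2$ is the Laplacian (acting componentwise). $M^f$ denotes right multiplication by $f$, and $\partial_{\underline{x}}^{\pm f}=\partial_{\underline{x}}\pm M^f$. *)

(* Defs.v *)
From HB Require Import structures.
From mathcomp Require Import all_boot all_order all_algebra.
From mathcomp Require Import all_classical all_reals all_analysis.
From mathcomp Require Import complex.

Set Implicit Arguments.
Unset Strict Implicit.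
Unset Printing Implicit Defensive.

Import Order.TTheory GRing.Theory Num.Theory.
Import numFieldNormedType.Exports.

Local Open Scope ring_scope.
Local Open Scope complex_scope.

Section Clifford.
Variables (R : realType) (n : nat).

(* Elements of the complex Clifford algebra C_n = R_{0,n} (x) C, written in
   the basis of blades e_A = e_{a_1} ... e_{a_k} (a_1 < ... < a_k), A a subset
   of {0,..,n-1} (e_{set0} = 1). *)
Definition Cl := {ffun {set 'I_n} -> R[i]}.

(* sign of e_A e_B = sgnAB A B * e_{A (+) B}: one sign per inversion
   (a in A, b in B, b < a) and one -1 per common generator (e_j^2 = -1). *)
Definition sgnAB (A B : {set 'I_n}) : R[i] :=
  (-1) ^+ (#|[set p : 'I_n * 'I_n | (p.1 \in A) && (p.2 \in B) && (p.2 < p.1)%N]|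
           + #|A :&: B|).

Definition symdiff (A B : {set 'I_n}) : {set 'I_n} := (A :\: B) :|: (B :\: A).

Definition clmul (a b : Cl) : Cl :=
  [ffun D => \sum_(A : {set 'I_n}) \sum_(B : {set 'I_n})
               (if symdiff A B == D then sgnAB A B * a A * b B else 0)].

Definition clscal (s : R[i]) : Cl := [ffun A => if A == finset.set0 then s else 0].

Definition clvec (h : 'I_n -> R[i]) : Cl :=
  [ffun A => \sum_(j < n) (if A == [set j] then h j else 0)].

Definition clgen (j : 'I_n) : Cl := [ffun A => if A == [set j] then 1 else 0].

Definition clcomp (a : Cl) (j : 'I_n) : R[i] := a [set j].

Definition pdC (j : 'I_n) (g : 'rV[R]_n -> R[i]) : 'rV[R]_n -> R[i] :=
  fun x => ('D_(delta_mx 0 j) (fun y => complex.Re (g y)) x)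
           +i* ('D_(delta_mx 0 j) (fun y => complex.Im (g y)) x).

Fixpoint iter_pd (s : seq 'I_n) (g : 'rV[R]_n -> R[i]) : 'rV[R]_n -> R[i] :=
  match s with
  | [::] => g
  | j :: s' => pdC j (iter_pd s' g)
  end.

Definition smooth_on (Omega : set 'rV[R]_n) (g : 'rV[R]_n -> R[i]) : Prop :=
  forall (s : seq 'I_n) (x : 'rV[R]_n), Omega x ->
    differentiable (fun y => complex.Re (iter_pd s g y)) x /\
    differentiable (fun y => complex.Im (iter_pd s g y)) x.

Definition pdCl (j : 'I_n) (F : 'rV[R]_n -> Cl) : 'rV[R]_n -> Cl :=
  fun x => [ffun A => pdC j (fun y => F y A) x].

Definition dirac_op (F : 'rV[R]_n -> Cl) : 'rV[R]_n -> Cl :=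
  fun x => \sum_(j < n) clmul (clgen j) (pdCl j F x).

Definition lapCl (F : 'rV[R]_n -> Cl) : 'rV[R]_n -> Cl :=
  fun x => \sum_(j < n) pdCl j (pdCl j F) x.

Definition lapC (g : 'rV[R]_n -> R[i]) : 'rV[R]_n -> R[i] :=
  fun x => \sum_(j < n) pdC j (pdC j g) x.

End Clifford.

(* Main.v *)
Require Import Defs.
From HB Require Import structures.
From mathcomp Require Import all_boot all_order all_algebra.
From mathcomp Require Import all_classical all_reals all_analysis.
From mathcomp Require Import complex.
From mathcomp Require Import ring.

Import Order.TTheory GRing.Theory Num.Theory.
Import numFieldNormedType.Exports.
Set Implicit Arguments.
Unset Strict Implicit.
Unset Printing Implicit Defensive.
Local Open Scope ring_scope.
Local Open Scope complex_scope.

Section PD.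
Variables (R : realType) (n : nat).
Local Notation V := 'rV[R]_n.
Implicit Types (g : V -> R[i]) (x : V) (j : 'I_n).

Definition cd j g x :=
  derivable (fun z => complex.Re (g z)) x (delta_mx 0 j) /\
  derivable (fun z => complex.Im (g z)) x (delta_mx 0 j).

Lemma ReD (a b : R[i]) : complex.Re (a + b) = complex.Re a + complex.Re b.
Proof. by case: a; case: b. Qed.
Lemma ImD (a b : R[i]) : complex.Im (a + b) = complex.Im a + complex.Im b.
Proof. by case: a; case: b. Qed.
Lemma caddE (a b c d : R) : ((a + b) +i* (c + d) : R[i]) = (a +i* c) + (b +i* d).
Proof. by []. Qed.

Lemma pdC_add j g1 g2 x : cd j g1 x -> cd j g2 x ->
  pdC j (fun y => g1 y + g2 y) x = pdC j g1 x + pdC j g2 x /\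
  cd j (fun y => g1 y + g2 y) x.
Proof.
move=> [r1 i1] [r2 i2]; rewrite /pdC /cd.
have -> : (fun y => complex.Re (g1 y + g2 y)) = (fun y => complex.Re (g1 y)) + (fun y => complex.Re (g2 y)).
  by apply/funext => y; rewrite ReD.
have -> : (fun y => complex.Im (g1 y + g2 y)) = (fun y => complex.Im (g1 y)) + (fun y => complex.Im (g2 y)).
  by apply/funext => y; rewrite ImD.
rewrite (deriveD r1 r2) (deriveD i1 i2).
split; first exact: caddE.
split; [exact: (derivableD r1 r2)|exact: (derivableD i1 i2)].
Qed.

Lemma ReN (a : R[i]) : complex.Re (- a) = - complex.Re a.
Proof. by case: a. Qed.
Lemma ImN (a : R[i]) : complex.Im (- a) = - complex.Im a.
Proof. by case: a. Qed.
Lemma coppE (a c : R) : ((- a) +i* (- c) : R[i]) = - (a +i* c).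
Proof. by []. Qed.

Lemma pdC_opp j g x : cd j g x ->
  pdC j (fun y => - g y) x = - pdC j g x /\ cd j (fun y => - g y) x.
Proof.
move=> [r1 i1]; rewrite /pdC /cd.
have -> : (fun y => complex.Re (- g y)) = - (fun y => complex.Re (g y)).
  by apply/funext => y; rewrite ReN.
have -> : (fun y => complex.Im (- g y)) = - (fun y => complex.Im (g y)).
  by apply/funext => y; rewrite ImN.
rewrite (deriveN r1) (deriveN i1).
split; first exact: coppE.
split; [exact: (derivableN r1)|exact: (derivableN i1)].
Qed.

Lemma ReM (a b : R[i]) : complex.Re (a * b) = complex.Re a * complex.Re b - complex.Im a * complex.Im b.
Proof. by case: a; case: b. Qed.
Lemma ImM (a b : R[i]) : complex.Im (a * b) = complex.Re a * complex.Im b + complex.Im a * complex.Re b.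
Proof. by case: a => a1 a2; case: b => b1 b2 /=; rewrite addrC. Qed.
Lemma cmulE (a b c d : R) : ((a +i* b) * (c +i* d) : R[i]) = (a * c - b * d) +i* (a * d + b * c).
Proof. by []. Qed.

Lemma mul_aux (a b c d da db dc dd : R) :
 ((a * dc + c * da) - (b * dd + d * db)) +i* ((a * dd + d * da) + (b * dc + c * db))
 = (da +i* db) * (c +i* d) + (a +i* b) * (dc +i* dd).
Proof. rewrite !cmulE -caddE; congr (_ +i* _); ring. Qed.

Lemma pdC_mul j g1 g2 x : cd j g1 x -> cd j g2 x ->
  pdC j (fun y => g1 y * g2 y) x = pdC j g1 x * g2 x + g1 x * pdC j g2 x /\
  cd j (fun y => g1 y * g2 y) x.
Proof.
move=> [r1 i1] [r2 i2]; rewrite /pdC /cd.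
set f1 := (fun y => complex.Re (g1 y)) in r1 *.
set f2 := (fun y => complex.Im (g1 y)) in i1 *.
set f3 := (fun y => complex.Re (g2 y)) in r2 *.
set f4 := (fun y => complex.Im (g2 y)) in i2 *.
have -> : (fun y => complex.Re (g1 y * g2 y)) = f1 * f3 - f2 * f4.
  by apply/funext => y; rewrite ReM.
have -> : (fun y => complex.Im (g1 y * g2 y)) = f1 * f4 + f2 * f3.
  by apply/funext => y; rewrite ImM.
have d13 := derivableM r1 r2; have d24 := derivableM i1 i2.
have d14 := derivableM r1 i2; have d23 := derivableM i1 r2.
split; last by split; [exact: (derivableB d13 d24)|exact: (derivableD d14 d23)].
rewrite (deriveB d13 d24) (deriveD d14 d23) (deriveM r1 r2) (deriveM i1 i2)
  (deriveM r1 i2) (deriveM i1 r2).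
have E1 : g1 x = f1 x +i* f2 x by rewrite /f1 /f2; case: (g1 x).
have E2 : g2 x = f3 x +i* f4 x by rewrite /f3 /f4; case: (g2 x).
rewrite E1 E2; exact: mul_aux.
Qed.

Lemma pdC_cst j (c : R[i]) x : pdC j (fun _ => c) x = 0 /\ cd j (fun _ => c) x.
Proof.
rewrite /pdC /cd; split; last by split; exact: derivable_cst.
rewrite (derive_cst (complex.Re c)) (derive_cst (complex.Im c)); by [].
Qed.

Lemma pdC_near j g1 g2 x : (\forall y \near x, g1 y = g2 y) -> pdC j g1 x = pdC j g2 x.
Proof.
move=> H; rewrite /pdC.
have H1 : \forall y \near x, complex.Re (g1 y) = complex.Re (g2 y) by apply: filterS H => y ->.
have H2 : \forall y \near x, complex.Im (g1 y) = complex.Im (g2 y) by apply: filterS H => y ->.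
by rewrite (near_eq_derive _ H1) (near_eq_derive _ H2).
Qed.

Lemma pdC_sumS j (F : 'I_n -> V -> R[i]) x (s : seq 'I_n) : (forall i, cd j (F i) x) ->
  pdC j (fun y => \sum_(i <- s) F i y) x = \sum_(i <- s) pdC j (F i) x /\
  cd j (fun y => \sum_(i <- s) F i y) x.
Proof.
move=> H; elim: s => [|a s [IH1 IH2]].
  have -> : (fun y => \sum_(i <- [::]) F i y) = (fun _ => 0) by apply/funext => y; rewrite big_nil.
  by rewrite big_nil; exact: pdC_cst.
have -> : (fun y => \sum_(i <- a :: s) F i y) = (fun y => F a y + \sum_(i <- s) F i y).
  by apply/funext => y; rewrite big_cons.
have [E C] := pdC_add (H a) IH2.
by rewrite big_cons E IH1.
Qed.

Lemma pdC_sum j (F : 'I_n -> V -> R[i]) x : (forall i, cd j (F i) x) ->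
  pdC j (fun y => \sum_(i < n) F i y) x = \sum_(i < n) pdC j (F i) x /\
  cd j (fun y => \sum_(i < n) F i y) x.
Proof. exact: pdC_sumS. Qed.

End PD.

Local Open Scope classical_set_scope.
Section Schwarz.
Variables (R : realType) (n : nat).
Local Notation V := 'rV[R]_n.

Lemma diff_small (G : V -> R) x e : differentiable G x -> 0 < e ->
  exists2 d : R, 0 < d & forall y, `|y| < d -> `|G (y + x) - G x - 'd G x y| <= e * `|y|.
Proof.
move=> dG e0; have := diff_locally dG; move/eqaddoP => /(_ e e0).
case/nbhs_norm0P => d /= d0 Hd; exists d => // y /Hd /=.
by rewrite opprD addrA.
Qed.

Lemma line_fun (g : V -> R) u p t :
  (fun h : R => h^-1 *: (((fun h => g (h *: u + p)) \o shift t) (h *: 1) - g (t *: u + p)))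
  = (fun h => h^-1 *: ((g \o shift (t *: u + p)) (h *: u) - g (t *: u + p))).
Proof.
apply/funext => h /=; congr (_ *: (g _ - _)).
by rewrite [h *: 1]mulr1 scalerDl addrA.
Qed.

Lemma line_derive (g : V -> R) u p t : differentiable g (t *: u + p) ->
  is_derive t 1 (fun h : R => g (h *: u + p)) ('D_u g (t *: u + p)).
Proof.
move=> dg; have dv := @diff_derivable _ _ _ _ _ u dg.
apply: DeriveDef; rewrite /derivable /derive line_fun //.
Qed.


Lemma est (O : set V) (g : V -> R) x u w e d0 :
  0 < d0 -> (forall y, `|y| < d0 -> O (y + x)) ->
  (forall y, O y -> differentiable g y) ->
  differentiable ('D_u g) x -> 0 < e ->
  exists2 d : R, 0 < d & forall s : R, 0 < s -> s * (`|u| + `|w|) < d ->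
    `|g (s *: u + (s *: w + x)) - g (s *: u + x) - g (s *: w + x) + g x
      - s ^+ 2 * 'd ('D_u g) x w| <= s ^+ 2 * (e * ((`|u| + `|w|) *+ 2)).
Proof.
move=> d00 hO dg dG e0.
have [dL dL0 HL] := diff_small dG e0.
exists (Num.min d0 dL); first by rewrite lt_min d00 dL0.
move=> s s0; rewrite lt_min => /andP[sd0 sdL].
set M := `|u| + `|w|.
have bnd : forall t, 0 <= t <= s -> `|t *: u + s *: w| <= s * M /\ `|t *: u| <= s * M.
  move=> t /andP[t0 ts].
  have h1 : `|t *: u| <= s * `|u| by rewrite normrZ ger0_norm // ler_wpM2r.
  have h2 : `|s *: w| = s * `|w| by rewrite normrZ gtr0_norm.
  split.
    apply: (le_trans (ler_normD _ _)); rewrite h2 /M mulrDr lerD2r; exact h1.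
  apply: (le_trans h1); apply: ler_wpM2l; first exact: ltW.
  by rewrite /M -[X in X <= _]addr0 lerD2l.
have inO : forall t, 0 <= t <= s -> O (t *: u + (s *: w + x)) /\ O (t *: u + x).
  move=> t /bnd [b1 b2]; split; [rewrite addrA|]; apply: hO; exact: (le_lt_trans _ sd0).
pose phi := fun t : R => g (t *: u + (s *: w + x)) - g (t *: u + x).
pose dphi := fun t : R => 'D_u g (t *: u + (s *: w + x)) - 'D_u g (t *: u + x).
have der : forall t, 0 <= t <= s -> is_derive t 1 phi (dphi t).
  move=> t /inO [Ho1 Ho2].
  have [d1 v1] := line_derive (dg _ Ho1); have [d2 v2] := line_derive (dg _ Ho2).
  apply: DeriveDef; first exact: (derivableB d1 d2).
  have := deriveB d1 d2; rewrite v1 v2 => E; exact E.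
have cont : {within `[0, s], continuous phi}.
  apply: continuous_in_subspaceT => t tI.
  have tI2 : 0 <= t <= s by move: tI; rewrite inE /= in_itv.
  have [dd _] := der t tI2.
  have dd2 := (derivable1_diffP _ _).1 dd.
  exact: (differentiable_continuous dd2).
have der' : forall t, t \in `]0, s[%R -> is_derive t 1 phi (dphi t).
  move=> t; rewrite in_itv /= => /andP[a b]; apply: der; by rewrite !ltW.
have [c cI E] := MVT_segment (ltW s0) der' cont.
have cI2 : 0 <= c <= s by move: cI; rewrite in_itv.
rewrite subr0 in E.
have -> : g (s *: u + (s *: w + x)) - g (s *: u + x) - g (s *: w + x) + g x = phi s - phi 0.
  rewrite /phi !scale0r !add0r; ring.
rewrite E.
set L := 'd ('D_u g) x.
have [b1 b2] := bnd c cI2.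
have k1 := HL (c *: u + s *: w) (le_lt_trans b1 sdL).
have k2 := HL (c *: u) (le_lt_trans b2 sdL).
have key : dphi c - s * L w = ('D_u g (c *: u + s *: w + x) - 'D_u g x - L (c *: u + s *: w))
   - ('D_u g (c *: u + x) - 'D_u g x - L (c *: u)).
  have hl : L (c *: u + s *: w) = L (c *: u) + s * L w.
    rewrite linearD; congr (_ + _); exact: linearZ.
  rewrite hl /dphi addrA; ring.
have eq1 : dphi c * s - s ^+ 2 * L w = (dphi c - s * L w) * s by ring.
rewrite eq1 normrM (gtr0_norm s0) key.
have hA : `|('D_u g (c *: u + s *: w + x) - 'D_u g x - L (c *: u + s *: w))
   - ('D_u g (c *: u + x) - 'D_u g x - L (c *: u))| <= e * (s * M) + e * (s * M).
  apply: (le_trans (ler_normB _ _)); apply: lerD.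
    apply: (le_trans k1); apply: ler_wpM2l; [exact: ltW e0|exact: b1].
  apply: (le_trans k2); apply: ler_wpM2l; [exact: ltW e0|exact: b2].
apply: (le_trans (ler_wpM2r (ltW s0) hA)).
have -> : (e * (s * M) + e * (s * M)) * s = s ^+ 2 * (e * (M *+ 2)) by ring.
by [].
Qed.

Lemma zero_small (z K : R) : 0 <= K -> (forall e, 0 < e -> `|z| <= e * K) -> z = 0.
Proof.
move=> K0 H; apply/eqP; rewrite -normr_le0; apply/ler_addgt0Pr => e e0.
rewrite add0r; have K1 : 0 < K + 1 by rewrite ltr_wpDl.
apply: (le_trans (H _ (divr_gt0 e0 K1))).
rewrite mulrAC ler_pdivrMr // ler_wpM2l ?ltW //.
by rewrite ltrDl.
Qed.

Lemma combine (D a b s e K : R) : 0 < s -> `|D - s ^+ 2 * a| <= s ^+ 2 * (e * K) ->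
  `|D - s ^+ 2 * b| <= s ^+ 2 * (e * K) -> `|a - b| <= e * (K *+ 2).
Proof.
move=> s0 h1 h2.
have s2 : 0 < s ^+ 2 by apply: exprn_gt0.
have E3 : (D - s ^+ 2 * b) - (D - s ^+ 2 * a) = s ^+ 2 * (a - b) by ring.
have h3 : s ^+ 2 * `|a - b| <= s ^+ 2 * (e * (K *+ 2)).
  have -> : s ^+ 2 * (e * (K *+ 2)) = s ^+ 2 * (e * K) + s ^+ 2 * (e * K).
    by rewrite -mulrDr -mulrDr mulr2n.
  rewrite -(ger0_norm (ltW s2)) -normrM -E3 (ger0_norm (ltW s2)).
  apply: (le_trans (ler_normB _ _)); exact: lerD.
by rewrite ler_pM2l in h3.
Qed.

Lemma schwarzR (O : set V) (g : V -> R) x u w : open O -> O x ->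
  (forall y, O y -> differentiable g y) ->
  differentiable ('D_u g) x -> differentiable ('D_w g) x ->
  'D_w ('D_u g) x = 'D_u ('D_w g) x.
Proof.
move=> oO Ox dg dGu dGw.
rewrite (deriveE w dGu) (deriveE u dGw).
have nO : nbhs x O by apply: open_nbhs_nbhs; split.
move/nbhs0P: nO; case/nbhs_norm0P => d0 /= d00 HO.
have hO : forall y, `|y| < d0 -> O (y + x) by move=> y /HO; rewrite addrC.
set M := `|u| + `|w|.
apply/eqP; rewrite -subr_eq0; apply/eqP.
apply: (@zero_small _ ((M *+ 2) *+ 2)); first by rewrite !mulrn_wge0 // addr_ge0.
move=> e e0.
have [d1 d10 H1] := @est O g x u w e d0 d00 hO dg dGu e0.
have [d2 d20 H2] := @est O g x w u e d0 d00 hO dg dGw e0.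
set s := Num.min d1 d2 / (M + 1).
have M1 : 0 < M + 1 by rewrite ltr_wpDl // addr_ge0.
have s0 : 0 < s by rewrite divr_gt0 // lt_min d10 d20.
have sM : s * M < Num.min d1 d2.
  rewrite /s mulrAC ltr_pdivrMr // ltr_pM2l ?ltrDl //.
  by rewrite lt_min d10 d20.
move: sM; rewrite lt_min => /andP[sd1 sd2].
have := H1 s s0 sd1; rewrite -/M => h1.
have sd2' : s * (`|w| + `|u|) < d2 by rewrite addrC.
have := H2 s s0 sd2'; rewrite [`|w| + `|u|]addrC -/M => h2.
have ew : s *: w + (s *: u + x) = s *: u + (s *: w + x) by rewrite addrCA.
have eD : g (s *: w + (s *: u + x)) - g (s *: w + x) - g (s *: u + x) + g x
   = g (s *: u + (s *: w + x)) - g (s *: u + x) - g (s *: w + x) + g x.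
  by rewrite ew; ring.
rewrite eD in h2.
exact: (combine s0 h1 h2).
Qed.
End Schwarz.

Local Close Scope classical_set_scope.
Section Smooth.
Variables (R : realType) (n : nat).
Local Notation V := 'rV[R]_n.
Implicit Types (g : V -> R[i]) (x : V) (j : 'I_n) (O : set V).

Lemma iter_pd_rcons s j g : iter_pd s (pdC j g) = iter_pd (rcons s j) g.
Proof. by elim: s => [|a s IH] //=; rewrite IH. Qed.

Lemma smooth_pd O g j : smooth_on O g -> smooth_on O (pdC j g).
Proof. by move=> H s y Oy; rewrite iter_pd_rcons; exact: H. Qed.

Lemma smooth_cd O g j y : smooth_on O g -> O y -> cd j g y.
Proof.
move=> H Oy; have [h1 h2] := H [::] y Oy.
split; [exact: (@diff_derivable _ _ _ _ _ _ h1)|exact: (@diff_derivable _ _ _ _ _ _ h2)].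
Qed.

Lemma pdC_pdC j k g x : pdC j (pdC k g) x =
  'D_(delta_mx 0 j) ('D_(delta_mx 0 k) (fun y => complex.Re (g y))) x +i*
  'D_(delta_mx 0 j) ('D_(delta_mx 0 k) (fun y => complex.Im (g y))) x.
Proof. by []. Qed.

Lemma RepdC k g : (fun y => complex.Re (pdC k g y)) = 'D_(delta_mx 0 k) (fun y => complex.Re (g y)).
Proof. by []. Qed.
Lemma ImpdC k g : (fun y => complex.Im (pdC k g y)) = 'D_(delta_mx 0 k) (fun y => complex.Im (g y)).
Proof. by []. Qed.

Lemma schwarzC O g x j k : open O -> O x -> smooth_on O g ->
  pdC j (pdC k g) x = pdC k (pdC j g) x.
Proof.
move=> oO Ox H; rewrite !pdC_pdC.
have d0 : forall y, O y -> (differentiable (fun y => complex.Re (g y)) y) /\ (differentiable (fun y => complex.Im (g y)) y).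
  by move=> y Oy; exact: (H [::] y Oy).
have [dk1 dk2] := H [:: k] x Ox; have [dj1 dj2] := H [:: j] x Ox.
rewrite /= RepdC ImpdC in dk1 dk2.
rewrite /= RepdC ImpdC in dj1 dj2.
have d1 : forall y, O y -> differentiable (fun y => complex.Re (g y)) y by move=> y /d0 [].
have d2 : forall y, O y -> differentiable (fun y => complex.Im (g y)) y by move=> y /d0 [].
rewrite (schwarzR oO Ox d1 dk1 dj1) (schwarzR oO Ox d2 dk2 dj2).
by [].
Qed.

End Smooth.
Section Cliff.
Variables (R : realType) (n : nat).
Local Notation C := (R[i]).
Implicit Types (a b : 'I_n -> C) (D : {set 'I_n}).

Definition sing D : option 'I_n := [pick m | D == [set m]].

Lemma sing1 (k : 'I_n) : sing [set k] = Some k.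
Proof.
rewrite /sing; case: pickP => [m /eqP /esym /set1_inj -> //|/(_ k)].
by rewrite eqxx.
Qed.

Lemma singP D : if sing D is Some m then D = [set m] else forall m, D != [set m].
Proof.
rewrite /sing; case: pickP => [m /eqP //|H m]; by rewrite H.
Qed.

Lemma clvecE a D : clvec a D = if sing D is Some m then a m else 0.
Proof.
rewrite ffunE; have := singP D; case: (sing D) => [m ->|H].
  rewrite (bigD1 m) //= eqxx big1 ?addr0 // => i ni.
  case: eqP => // /set1_inj E; by rewrite E eqxx in ni.
by rewrite big1 // => i _; rewrite (negbTE (H i)).
Qed.

Lemma clgenE (j : 'I_n) D : clgen R j D = if sing D is Some m then (m == j)%:R else 0.
Proof.
rewrite ffunE; have := singP D; case: (sing D) => [m ->|H].
  case: (m =P j) => [->|ne]; first by rewrite eqxx.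
  case: eqP => // /set1_inj E; by rewrite E in ne.
by rewrite (negbTE (H j)).
Qed.

Lemma sgnAB0l B : sgnAB R (finset.set0 : {set 'I_n}) B = 1 :> C.
Proof.
rewrite /sgnAB finset.set0I cards0 addn0.
have -> : [set p : 'I_n * 'I_n | (p.1 \in finset.set0) && (p.2 \in B) && (p.2 < p.1)%N] = finset.set0.
  by apply/finset.setP => p; rewrite !inE.
by rewrite cards0 expr0.
Qed.

Lemma sgnAB0r A : sgnAB R A (finset.set0 : {set 'I_n}) = 1 :> C.
Proof.
rewrite /sgnAB finset.setI0 cards0 addn0.
have -> : [set p : 'I_n * 'I_n | (p.1 \in A) && (p.2 \in finset.set0) && (p.2 < p.1)%N] = finset.set0.
  by apply/finset.setP => p; rewrite !inE andbF.
by rewrite cards0 expr0.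
Qed.

Lemma symdiff0l (B : {set 'I_n}) : symdiff finset.set0 B = B.
Proof. by rewrite /symdiff finset.set0D finset.set0U finset.setD0. Qed.
Lemma symdiff0r (A : {set 'I_n}) : symdiff A finset.set0 = A.
Proof. by rewrite /symdiff finset.setD0 finset.set0D finset.setU0. Qed.

Lemma clmul_scal_l (s : C) (x : Cl R n) D : clmul (clscal n s) x D = s * x D.
Proof.
rewrite /clscal.
rewrite ffunE (bigD1 finset.set0) //= [X in _ + X]big1 ?addr0.
  rewrite (bigD1 D) //= symdiff0l eqxx sgnAB0l ffunE eqxx mul1r [X in _ + X]big1 ?addr0 //.
  by move=> B nB; rewrite symdiff0l (negbTE nB).
move=> A nA; apply: big1 => B _; rewrite ffunE (negbTE nA).
by case: ifP => _; rewrite ?mulr0 ?mul0r.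
Qed.

Lemma clmul_scal_r (x : Cl R n) (s : C) D : clmul x (clscal n s) D = x D * s.
Proof.
rewrite /clscal.
rewrite ffunE (bigD1 D) //= (bigD1 finset.set0) //= symdiff0r eqxx sgnAB0r ffunE eqxx mul1r.
rewrite [X in (_ + X) + _ = _]big1 ?addr0; last first.
  by move=> B nB; rewrite ffunE (negbTE nB) mulr0 if_same.
rewrite [X in _ + X]big1 ?addr0 // => A nA; apply: big1 => B _.
case: (B =P finset.set0) => [->|nB]; first by rewrite symdiff0r (negbTE nA).
by rewrite ffunE; move/eqP/negbTE: nB => ->; rewrite mulr0 if_same.
Qed.

Lemma sum_clvec a (Q : {set 'I_n} -> C) :
  \sum_(A : {set 'I_n}) clvec a A * Q A = \sum_(j < n) a j * Q [set j].
Proof.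
under eq_bigr do rewrite ffunE mulr_suml.
rewrite exchange_big /=; apply: eq_bigr => j _.
rewrite (bigD1 [set j]) //= eqxx [X in _ + X]big1 ?addr0 // => A nA.
by rewrite (negbTE nA) mul0r.
Qed.

Lemma clmul_vec a b D : clmul (clvec a) (clvec b) D =
  \sum_(j < n) \sum_(k < n) (if symdiff [set j] [set k] == D
                               then sgnAB R [set j] [set k] * a j * b k else 0).
Proof.
rewrite ffunE.
transitivity (\sum_(A : {set 'I_n}) clvec a A * \sum_(B : {set 'I_n})
   clvec b B * (if symdiff A B == D then sgnAB R A B else 0)).
  apply: eq_bigr => A _; rewrite mulr_sumr; apply: eq_bigr => B _.
  by case: ifP => _; [ring | rewrite !mulr0].
rewrite sum_clvec; apply: eq_bigr => j _; rewrite sum_clvec mulr_sumr.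
apply: eq_bigr => k _; by case: ifP => _; [ring | rewrite !mulr0].
Qed.

Lemma symdiff11 (j k : 'I_n) :
  symdiff [set j] [set k] = if j == k then finset.set0 else [set j; k].
Proof.
rewrite /symdiff; case: (j =P k) => [->|njk]; first by rewrite finset.setDv finset.setU0.
apply/finset.setP => i; rewrite !inE.
have njk' : (j == k) = false by apply/eqP.
by have [->|nij] := eqVneq i j; rewrite /= ?andbT ?andbF ?njk'.
Qed.

Lemma set2_eq (j k p q : 'I_n) : j != k -> p != q ->
  ([set j; k] == [set p; q]) = ((j == p) && (k == q)) || ((j == q) && (k == p)).
Proof.
move=> njk npq; apply/idP/idP.
  move/eqP => E.
  have hj : j \in [set p; q] by rewrite -E !inE eqxx.
  have hk : k \in [set p; q] by rewrite -E !inE eqxx orbT.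
  rewrite !inE in hj hk.
  case/orP: hj => /eqP ej; case/orP: hk => /eqP ek; subst.
  - by rewrite eqxx in njk.
  - by rewrite !eqxx.
  - by rewrite !eqxx orbT.
  - by rewrite eqxx in njk.
by case/orP => /andP [/eqP -> /eqP ->] //; rewrite finset.setUC.
Qed.

Lemma sgn_gen (j k : 'I_n) :
  sgnAB R [set j] [set k] = (-1) ^+ ((k < j)%N + (j == k)).
Proof.
rewrite /sgnAB; congr (_ ^+ (_ + _)).
  case: ltnP => kj.
    have -> : [set p : 'I_n * 'I_n | (p.1 \in [set j]) && (p.2 \in [set k]) && (p.2 < p.1)%N]
       = [set (j, k)].
      apply/finset.setP => -[p1 p2]; rewrite !inE /= xpair_eqE.
      case: (p1 =P j) => [->|] //=; case: (p2 =P k) => [->|] //=.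
    by rewrite cards1.
  have -> : [set p : 'I_n * 'I_n | (p.1 \in [set j]) && (p.2 \in [set k]) && (p.2 < p.1)%N]
       = finset.set0.
    apply/finset.setP => -[p1 p2]; rewrite !inE /=.
    case: (p1 =P j) => [->|] //=; case: (p2 =P k) => [->|] //=; by rewrite ltnNge kj.
  by rewrite cards0.
case: (j =P k) => [->|njk]; first by rewrite finset.setIid cards1.
have -> : [set j] :&: [set k] = finset.set0.
  apply/finset.setP => i; rewrite !inE; case: (i =P j) => [->|] //=.
  by case: (j =P k).
by rewrite cards0.
Qed.

Lemma vv0 a b : clmul (clvec a) (clvec b) finset.set0 = - \sum_(j < n) a j * b j.
Proof.
rewrite clmul_vec -sumrN; apply: eq_bigr => j _.
rewrite (bigD1 j) //= symdiff11 eqxx eqxx sgn_gen ltnn eqxx.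
rewrite (_ : (false + true)%N = 1%N) // expr1 [X in _ + X]big1 ?addr0.
  by rewrite mulN1r mulNr.
move=> k nk; rewrite eq_sym in nk; rewrite symdiff11 (negbTE nk).
case: ifP => // /eqP E.
have : j \in finset.set0 by rewrite -E !inE eqxx.
by rewrite inE.
Qed.

Lemma sum2_delta (F : 'I_n -> 'I_n -> C) p q :
  \sum_(j < n) \sum_(k < n) (if (j == p) && (k == q) then F j k else 0) = F p q.
Proof.
rewrite (bigD1 p) //= [X in _ + X]big1 ?addr0.
  rewrite (bigD1 q) //= ?eqxx [X in _ + X]big1 ?addr0 // => k nk.
  by rewrite ?eqxx (negbTE nk).
by move=> j nj; apply: big1 => k _; rewrite (negbTE nj).
Qed.

Lemma vv2 a b (p q : 'I_n) : (p < q)%N ->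
  clmul (clvec a) (clvec b) [set p; q] = a p * b q - a q * b p.
Proof.
move=> pq.
have npq : p != q by rewrite -val_eqE /= neq_ltn pq.
rewrite clmul_vec.
transitivity (\sum_(j < n) \sum_(k < n)
   ((if (j == p) && (k == q) then a j * b k else 0) +
    (if (j == q) && (k == p) then - (a j * b k) else 0))).
  apply: eq_bigr => j _; apply: eq_bigr => k _.
  rewrite symdiff11; case: (j =P k) => [<-|njk].
    have -> : (finset.set0 == [set p; q]) = false.
      apply/negP => /eqP E; have : p \in finset.set0 by rewrite E !inE eqxx.
      by rewrite inE.
    case: (j =P p) => [->|] /=; last by case: (j =P q) => //= _; rewrite addr0.
    by rewrite (negbTE npq) /= addr0.
  move/eqP: njk => njk; rewrite set2_eq //.
  case: (j =P p) => [->|njp] /=; case: (k =P q) => [->|nkq] /=.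
  - by rewrite sgn_gen ltnNge (ltnW pq) (negbTE npq) /= expr0 mul1r addr0.
  - case: (p =P q) => [E|_] /=; first by rewrite E eqxx in npq.
    by rewrite addr0.
  - by rewrite [q == p]eq_sym (negbTE npq) andbF /= add0r.
  - case: (j =P q) => [->|] /=; last by rewrite addr0.
    case: (k =P p) => [->|] /=; last by rewrite addr0.
    rewrite sgn_gen pq [q == p]eq_sym (negbTE npq) (_ : (true + false)%N = 1%N) //.
    by rewrite expr1 add0r mulN1r mulNr.
rewrite (eq_bigr (fun j => \sum_(k < n) (if (j == p) && (k == q) then a j * b k else 0)
   + \sum_(k < n) (if (j == q) && (k == p) then - (a j * b k) else 0))); last first.
  by move=> j _; rewrite big_split.
rewrite big_split /= !sum2_delta; ring.
Qed.

End Cliff.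
Section Dirac.
Variables (R : realType) (n : nat).
Local Notation V := 'rV[R]_n.
Local Notation C := (R[i]).

Lemma pdCl_vec j (F : 'I_n -> V -> C) x :
  pdCl j (fun y => clvec (fun k => F k y)) x = clvec (fun k => pdC j (F k) x).
Proof.
apply/ffunP => D; rewrite /pdCl ffunE clvecE.
have -> : (fun y => clvec (fun k => F k y) D) = (fun y => if sing D is Some m then F m y else 0).
  by apply/funext => y; rewrite clvecE.
case: (sing D) => [m|] //; exact: (pdC_cst j 0 x).1.
Qed.

Lemma pdCl_scal j (phi : V -> C) x :
  pdCl j (fun y => clscal n (phi y)) x = clscal n (pdC j phi x).
Proof.
apply/ffunP => D; rewrite /pdCl !ffunE.
have -> : (fun y => clscal n (phi y) D) = (fun y => if D == finset.set0 then phi y else 0).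
  by apply/funext => y; rewrite ffunE.
case: (D == finset.set0) => //; exact: (pdC_cst j 0 x).1.
Qed.

Lemma clgen_vec (j : 'I_n) : clgen R j = clvec (fun m => (m == j)%:R).
Proof. by apply/ffunP => D; rewrite clgenE clvecE. Qed.

Lemma dirac_scal (phi : V -> C) x :
  dirac_op (fun y => clscal n (phi y)) x = clvec (fun k => pdC k phi x).
Proof.
apply/ffunP => D; rewrite /dirac_op sum_ffunE clvecE.
under eq_bigr do rewrite pdCl_scal clmul_scal_r clgenE.
case: (sing D) => [m|]; last by rewrite big1 // => j _; rewrite mul0r.
rewrite (bigD1 m) //= eqxx mul1r [X in _ + X]big1 ?addr0 // => j nj.
by rewrite eq_sym (negbTE nj) mul0r.
Qed.

Lemma dirac_vec (F : 'I_n -> V -> C) x :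
  dirac_op (fun y => clvec (fun k => F k y)) x =
  \sum_(j < n) clmul (clvec (fun m => (m == j)%:R)) (clvec (fun k => pdC j (F k) x)).
Proof. by apply: eq_bigr => j _; rewrite pdCl_vec clgen_vec. Qed.

End Dirac.
Section SM.
Variables (R : realType) (n : nat).
Local Notation V := 'rV[R]_n.
Local Notation C := (R[i]).

Lemma pdC_sub (j : 'I_n) (g1 g2 : V -> C) x : cd j g1 x -> cd j g2 x ->
  pdC j (fun y => g1 y - g2 y) x = pdC j g1 x - pdC j g2 x /\
  cd j (fun y => g1 y - g2 y) x.
Proof.
move=> c1 c2; have [e1 c3] := pdC_opp c2; have [e2 c4] := pdC_add c1 c3.
split; last exact: c4.
by rewrite -e1; exact: e2.
Qed.

Lemma final_alg (lam phix fkx dkphi SA SA0 SB SCE SP SPk SFE SFk SG SFF vx : C) :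
  SA0 = -(0 * phix + lam ^+ 2 * dkphi) + ((SPk + SFk) * phix + (SG + SFF) * dkphi) ->
  SA0 = SA -> SPk = SP -> SFk = SFE + SFE ->
  SB = -(lam ^+ 2 * phix) - vx * phix ->
  vx = -SG - SFF ->
  -(SA - ((SB * fkx + SCE) + (SCE + phix * SP))) - (dkphi - phix * fkx) * vx
    - (SCE - phix * SFE) *+ 2 = lam ^+ 2 * (dkphi - phix * fkx).
Proof.
move=> h1 h2 h3 h4 h5 h6; rewrite -h2 h1 h3 h4 h5 h6; ring.
Qed.

Lemma scalar_main (Omega : set V) (v : V -> C) (lambda : C)
  (f : 'I_n -> V -> C) (phi : V -> C) :
  open Omega ->
  (forall j, smooth_on Omega (f j)) -> smooth_on Omega phi ->
  (forall y, Omega y -> v y = - (\sum_(j < n) pdC j (f j) y) - \sum_(j < n) f j y * f j y) ->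
  (forall y, Omega y -> forall a b, pdC a (f b) y = pdC b (f a) y) ->
  (forall y, Omega y -> - lapC phi y - v y * phi y = lambda ^+ 2 * phi y) ->
  forall x k, Omega x ->
  - (\sum_(j < n) pdC j (pdC j (fun z => pdC k phi z - phi z * f k z)) x)
  - (pdC k phi x - phi x * f k x) * v x
  - (\sum_(j < n) (pdC j phi x - phi x * f j x) * pdC j (f k) x) *+ 2
  = lambda ^+ 2 * (pdC k phi x - phi x * f k x).
Proof.
move=> oO sf sphi rv rc sch x k Ox.
have nO : nbhs x Omega by apply: open_nbhs_nbhs; split.
have F1 : forall j, pdC j (pdC j (fun z => pdC k phi z - phi z * f k z)) x =
   pdC j (pdC j (pdC k phi)) x - ((pdC j (pdC j phi) x * f k x + pdC j phi x * pdC j (f k) x)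
   + (pdC j phi x * pdC j (f k) x + phi x * pdC j (pdC j (f k)) x)).
  move=> j.
  have E1 : \forall y \near x, pdC j (fun z => pdC k phi z - phi z * f k z) y =
     pdC j (pdC k phi) y - (pdC j phi y * f k y + phi y * pdC j (f k) y).
    apply: (filterS _ nO) => y Oy.
    have c1 := smooth_cd j (smooth_pd k sphi) Oy.
    have c2 := smooth_cd j sphi Oy; have c3 := smooth_cd j (sf k) Oy.
    have [m1 cm] := pdC_mul c2 c3.
    by rewrite (pdC_sub c1 cm).1 m1.
  rewrite (pdC_near j E1).
  have c1 := smooth_cd j (smooth_pd j (smooth_pd k sphi)) Ox.
  have [a1e a1c] := pdC_mul (smooth_cd j (smooth_pd j sphi) Ox) (smooth_cd j (sf k) Ox).
  have [a2e a2c] := pdC_mul (smooth_cd j sphi Ox) (smooth_cd j (smooth_pd j (sf k)) Ox).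
  have [a3e a3c] := pdC_add a1c a2c.
  by rewrite (pdC_sub c1 a3c).1 a3e a1e a2e.
have F3 : forall j, pdC j (pdC j (pdC k phi)) x = pdC k (pdC j (pdC j phi)) x.
  move=> j.
  have S1 : \forall y \near x, pdC j (pdC k phi) y = pdC k (pdC j phi) y.
    by apply: (filterS _ nO) => y Oy; exact: (schwarzC j k oO Oy sphi).
  rewrite (pdC_near j S1); exact: (schwarzC j k oO Ox (smooth_pd j sphi)).
have F4 : forall j, pdC k (pdC j (f j)) x = pdC j (pdC j (f k)) x.
  move=> j; rewrite (schwarzC k j oO Ox (sf j)).
  have S1 : \forall y \near x, pdC k (f j) y = pdC j (f k) y.
    by apply: (filterS _ nO) => y Oy; exact: (rc y Oy k j).
  exact: (pdC_near j S1).
have F5 : forall j, pdC k (f j) x = pdC j (f k) x by move=> j; exact: (rc x Ox k j).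
have L1 : \forall y \near x, lapC phi y = - (lambda ^+ 2 * phi y) +
    ((\sum_(j < n) pdC j (f j) y) + \sum_(j < n) f j y * f j y) * phi y.
  apply: (filterS _ nO) => y Oy.
  have E := sch y Oy; rewrite (rv y Oy) in E.
  transitivity (- (- lapC phi y - (- (\sum_(j < n) pdC j (f j) y) - \sum_(j < n) f j y * f j y) * phi y)
     + ((\sum_(j < n) pdC j (f j) y) + \sum_(j < n) f j y * f j y) * phi y).
    by ring.
  by rewrite E.
have dL : pdC k (lapC phi) x = \sum_(j < n) pdC k (pdC j (pdC j phi)) x :=
  (pdC_sum (fun j => smooth_cd k (smooth_pd j (smooth_pd j sphi)) Ox)).1.
have [sGe sGc] := pdC_sum (fun j => smooth_cd k (smooth_pd j (sf j)) Ox).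
have [sFe sFc] := pdC_sum (fun j => (pdC_mul (smooth_cd k (sf j) Ox) (smooth_cd k (sf j) Ox)).2).
have [lae lac] := pdC_mul (pdC_cst k (lambda ^+ 2) x).2 (smooth_cd k sphi Ox).
have [ope opc] := pdC_opp lac.
have [ade adc] := pdC_add sGc sFc.
have [pre prc] := pdC_mul adc (smooth_cd k sphi Ox).
have [toe toc] := pdC_add opc prc.
have dR := pdC_near k L1.
rewrite dL toe ope lae pre ade sGe sFe (pdC_cst k (lambda ^+ 2) x).1 in dR.
have Q1 : \sum_(j < n) pdC k (pdC j (f j)) x = \sum_(j < n) pdC j (pdC j (f k)) x.
  by apply: eq_bigr => j _; exact: F4.
have Q2 : \sum_(j < n) pdC k (fun y => f j y * f j y) x =
   \sum_(j < n) f j x * pdC j (f k) x + \sum_(j < n) f j x * pdC j (f k) x.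
  rewrite -big_split; apply: eq_bigr => j _.
  rewrite (pdC_mul (smooth_cd k (sf j) Ox) (smooth_cd k (sf j) Ox)).1 F5.
  by rewrite [pdC j (f k) x * f j x]mulrC.
have Q3 : \sum_(j < n) pdC k (pdC j (pdC j phi)) x = \sum_(j < n) pdC j (pdC j (pdC k phi)) x.
  by apply: eq_bigr => j _; exact: (esym (F3 j)).
have E : - (\sum_(j < n) pdC j (pdC j phi) x) - v x * phi x = lambda ^+ 2 * phi x := sch x Ox.
have HB : \sum_(j < n) pdC j (pdC j phi) x = - (lambda ^+ 2 * phi x) - v x * phi x.
  transitivity (- (- (\sum_(j < n) pdC j (pdC j phi) x) - v x * phi x) - v x * phi x).
    by ring.
  by rewrite E.
under eq_bigr do rewrite F1.
have G1 : \sum_(j < n) (pdC j (pdC j (pdC k phi)) x - ((pdC j (pdC j phi) x * f k x + pdC j phi x * pdC j (f k) x)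
   + (pdC j phi x * pdC j (f k) x + phi x * pdC j (pdC j (f k)) x))) =
   \sum_(j < n) pdC j (pdC j (pdC k phi)) x - (((\sum_(j < n) pdC j (pdC j phi) x) * f k x
     + \sum_(j < n) pdC j phi x * pdC j (f k) x) + (\sum_(j < n) pdC j phi x * pdC j (f k) x
     + phi x * \sum_(j < n) pdC j (pdC j (f k)) x)).
  by rewrite sumrB !big_split /= -mulr_suml -mulr_sumr.
have G2 : \sum_(j < n) (pdC j phi x - phi x * f j x) * pdC j (f k) x =
   \sum_(j < n) pdC j phi x * pdC j (f k) x - phi x * \sum_(j < n) f j x * pdC j (f k) x.
  rewrite mulr_sumr -sumrB; apply: eq_bigr => j _; ring.
apply: (etrans (congr2 (fun a b => - a - (pdC k phi x - phi x * f k x) * v x - b *+ 2) G1 G2)).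
exact: (final_alg _ _ dR Q3 Q1 Q2 HB (rv x Ox)).
Qed.


End SM.
Section Main.
Variables (R : realType) (n : nat).
Local Notation V := 'rV[R]_n.
Local Notation C := (R[i]).

Lemma claddE (a b : Cl R n) D : (a + b) D = a D + b D. Proof. by rewrite !ffunE. Qed.
Lemma cloppE (a : Cl R n) D : (- a) D = - a D. Proof. by rewrite !ffunE. Qed.
Lemma clsubE (a b : Cl R n) D : (a - b) D = a D - b D. Proof. by rewrite !ffunE. Qed.

Lemma lapCl_comp (F : V -> Cl R n) x D :
  lapCl F x D = \sum_(j < n) pdC j (pdC j (fun z => F z D)) x.
Proof.
rewrite /lapCl sum_ffunE; apply: eq_bigr => j _; rewrite /pdCl ffunE.
congr (pdC j _ x); apply/funext => y; by rewrite ffunE.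
Qed.

Lemma sum_delta (c : 'I_n -> C) p : \sum_(j < n) (p == j)%:R * c j = c p.
Proof.
rewrite (bigD1 p) //= eqxx mul1r [X in _ + X]big1 ?addr0 // => m nm.
by rewrite eq_sym (negbTE nm) mul0r.
Qed.

Lemma ric_parts (f : 'I_n -> V -> C) (vx : C) x :
  dirac_op (fun y => clvec (fun j => f j y)) x
       + clmul (clvec (fun j => f j x)) (clvec (fun j => f j x)) = clscal n vx ->
  vx = - (\sum_(j < n) pdC j (f j) x) - \sum_(j < n) f j x * f j x /\
  (forall a b, pdC a (f b) x = pdC b (f a) x).
Proof.
move=> E; split.
  have := congr1 (fun F : Cl R n => F finset.set0) E.
  rewrite /= claddE dirac_vec sum_ffunE vv0 ffunE eqxx => <-.
  congr (_ - _).
  rewrite -sumrN; apply: eq_bigr => j _; rewrite vv0; congr (- _).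
  rewrite (bigD1 j) //= eqxx mul1r [X in _ + X]big1 ?addr0 // => m nm.
  by rewrite (negbTE nm) mul0r.
have key : forall p q : 'I_n, (p < q)%N -> pdC p (f q) x = pdC q (f p) x.
  move=> p q pq.
  have := congr1 (fun F : Cl R n => F [set p; q]) E.
  rewrite /= claddE dirac_vec sum_ffunE vv2 // ffunE.
  have -> : ([set p; q] == finset.set0) = false.
    apply/negP => /eqP E2; have : p \in finset.set0 by rewrite -E2 !inE eqxx.
    by rewrite inE.
  under eq_bigr do rewrite vv2 //.
  rewrite sumrB !sum_delta => H.
  have H2 : pdC p (f q) x - pdC q (f p) x = 0.
    rewrite -H; ring.
  by apply/eqP; rewrite -subr_eq0 H2.
move=> a b; case: (ltngtP a b) => ab; first exact: key.
  exact/esym/key.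
by have -> : a = b by apply: val_inj.
Qed.



End Main.

Local Close Scope complex_scope.

Theorem proposition6p2 (R : realType) (n : nat) (Omega : set 'rV[R]_n)
  (v : 'rV[R]_n -> R[i]) (lambda : R[i])
  (f : 'I_n -> 'rV[R]_n -> R[i]) (phi : 'rV[R]_n -> R[i]) :
  (1 < n)%N ->
  open Omega ->
  lambda != 0 ->
  (forall j, smooth_on Omega (f j)) ->
  smooth_on Omega phi ->
  (* Clifford Riccati equation  d f + f^2 = v  on Omega, f = sum_j f_j e_j *)
  (forall x, Omega x ->
     dirac_op (fun y => clvec (fun j => f j y)) x
       + clmul (clvec (fun j => f j x)) (clvec (fun j => f j x))
     = clscal n (v x)) ->
  (* Schroedinger equation  (-Delta_n - v) phi = lambda^2 phi  on Omega *)
  (forall x, Omega x -> - lapC phi x - v x * phi x = lambda ^+ 2 * phi x) ->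
  (* h = d phi - phi f  (right multiplication by f) *)
  let h : 'rV[R]_n -> Cl R n := fun x =>
    dirac_op (fun y => clscal n (phi y)) x
      - clmul (clscal n (phi x)) (clvec (fun j => f j x)) in
  forall x, Omega x ->
    (- lapCl h x - clmul (h x) (clscal n (v x)))
      - (\sum_(j < n) clmul (clscal n (clcomp (h x) j))
                             (pdCl j (fun y => clvec (fun k => f k y)) x)) *+ 2
    = clmul (clscal n (lambda ^+ 2)) (h x).
Proof.
move=> _ oO _ sf sphi ric sch h x Ox.
have hE : forall z, h z = clvec (fun k => pdC k phi z - phi z * f k z).
  move=> z; apply/ffunP => D; rewrite /h clsubE dirac_scal clmul_scal_l !clvecE.
  by case: (sing D) => [m|] //; rewrite mulr0 subr0.
have rv : forall y, Omega y -> v y = - (\sum_(j < n) pdC j (f j) y) - \sum_(j < n) f j y * f j y.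
  by move=> y Oy; have [] := ric_parts (ric y Oy).
have rc : forall y, Omega y -> forall a b, pdC a (f b) y = pdC b (f a) y.
  by move=> y Oy; have [] := ric_parts (ric y Oy).
have SM := fun k => scalar_main oO sf sphi rv rc sch k Ox.
apply/ffunP => D.
rewrite clsubE ffunMnE clsubE cloppE clmul_scal_r lapCl_comp sum_ffunE ?clmul_scal_l.
have S2 : \sum_(j < n) clmul (clscal n (clcomp (h x) j))
     (pdCl j (fun y => clvec (fun k => f k y)) x) D =
   \sum_(j < n) (pdC j phi x - phi x * f j x) * (if sing D is Some k then pdC j (f k) x else 0).
  by apply: eq_bigr => j _; rewrite clmul_scal_l pdCl_vec /clcomp hE !clvecE sing1.
rewrite S2.
rewrite hE !clvecE.
have hD : (fun z => h z D) = (fun z => if sing D is Some k then pdC k phi z - phi z * f k z else 0).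
  by apply/funext => z; rewrite hE clvecE.
rewrite hD.
case: (sing D) => [k|]; first exact: SM.
have Z : forall j, pdC j (fun _ : 'rV[R]_n => (0 : R[i])) = fun _ => 0.
  by move=> j; apply/funext => y; rewrite (pdC_cst j 0 y).1.
under eq_bigr do rewrite Z (pdC_cst _ 0 x).1.
rewrite big1 // ?mulr0 ?mul0r.
rewrite big1; last by move=> j _; rewrite mulr0.
by rewrite mul0rn !oppr0 !addr0.
Qed.
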